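(* Let $k\ge 3$ and $1\le t\le k-1$ be integers. Then there exists a $t$-intersecting family $\mathcal{F}\subset\binom{[2k-t+1]}{k}$ such that $$\bigcup_{j=0}^{k-t}\binom{[2k-2t+2]}{j}\subset\mathcal{D}(\mathcal{F}).$$
   Context: $[m]=\{1,\dots,m\}$; $\binom{S}{j}$ is the family of all $j$-element subsets of $S$. For a family $\mathcal{F}$ of sets, $\mathcal{D}(\mathcal{F})=\{F\setminus F' : F,F'\in\mathcal{F}\}$. A family $\mathcal{F}$ is $t$-intersecting if $|F\cap F'|\ge t$ for all $F,F'\in\mathcal{F}$. *)

(* Defs.v *)
From mathcomp Require Import all_boot.
Set Implicit Arguments. Unset Strict Implicit. Unset Printing Implicit Defensive.

(* Ground set [m] = {1,...,m} is modelled by 'I_m = {0,...,m-1} (shift by one). *)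

Definition diff_family (T : finType) (F : {set {set T}}) : {set {set T}} :=
  [set A :\: B | A in F, B in F].

Definition t_intersecting (T : finType) (t : nat) (F : {set {set T}}) : Prop :=
  forall A B, A \in F -> B \in F -> t <= #|A :&: B|.

Definition initseg (n l : nat) : {set 'I_n} := [set i : 'I_n | i < l].

(* Main.v *)
Require Import Defs.
From mathcomp Require Import all_boot.
From mathcomp Require Import zify.
Set Implicit Arguments. Unset Strict Implicit. Unset Printing Implicit Defensive.

Lemma exists_sub (T : finType) (A : {set T}) m : m <= #|A| ->
  exists S : {set T}, S \subset A /\ #|S| = m.
Proof.
elim: m => [|m IH] Hm; first by exists set0; rewrite sub0set cards0.
have [S [HS cS]] := IH (ltnW Hm).
have : 0 < #|A :\: S| by rewrite cardsDS // cS subn_gt0.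
rewrite card_gt0 => /set0Pn [x]; rewrite inE => /andP [xS xA].
exists (x |: S); rewrite subUset sub1set xA HS cardsU1 xS cS; split=> //.
Qed.

Lemma cardsU_disj (T : finType) (X Z : {set T}) :
  (forall u, u \in X -> u \notin Z) -> #|X :|: Z| = #|X| + #|Z|.
Proof.
move=> H; rewrite cardsU.
have -> : X :&: Z = set0.
  apply/setP => u; rewrite !inE; case: (boolP (u \in X)) => h //.
  by rewrite (negbTE (H u h)).
by rewrite cards0 subn0.
Qed.

Lemma kneser (T : finType) (k : nat) (col : {set T} -> bool) :
  #|T| = (2 * k)%N -> 0 < k ->
  (forall A : {set T}, #|A| = k -> col (~: A) = ~~ col A) ->
  (forall B : {set T}, #|B| = k.-1 ->
     exists x y, [/\ x \notin B, y \notin B, col (x |: B) & ~~ col (y |: B)]) ->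
  exists F : {set {set T}},
  (forall A, A \in F -> #|A| = k) /\ t_intersecting 1 F /\
  (forall B : {set T}, #|B| <= k.-1 -> B \in diff_family F).
Proof.
move=> cT k0 anti star.
pose F := [set A : {set T} | (#|A| == k) && col A].
exists F.
have cC : forall A : {set T}, #|~: A| = (2 * k - #|A|)%N.
  by move=> A; have := cardsC A; rewrite cT; lia.
have inF : forall A, (A \in F) = (#|A| == k) && col A by move=> A; rewrite inE.
have cF : forall A : {set T}, #|A| = k -> ~~ col A -> ~: A \in F.
  move=> A cA nA; rewrite inF cC cA anti // nA andbT; apply/eqP; lia.
have dF : forall A A' : {set T}, A \in F -> A' \in F -> A :\: A' \in diff_family F.
  by move=> A A' h1 h2; rewrite /diff_family; apply: imset2_f.
split; first by move=> A; rewrite inF => /andP [/eqP].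
split.
  move=> A B; rewrite !inF => /andP [/eqP cA colA] /andP [/eqP cB colB].
  rewrite lt0n; apply/negP => /eqP H.
  move/eqP: H; rewrite cards_eq0 => /eqP H0.
  have dis : B \subset ~: A.
    apply/subsetP => x xB; rewrite inE; apply/negP => xA.
    have : x \in A :&: B by rewrite inE xA xB.
    by rewrite H0 inE.
  have : B == ~: A by rewrite eqEcard dis cC cA cB; apply/leP; lia.
  move/eqP => eB; move: colB; rewrite eB anti // colA //.
move=> B cB.
case: (posnP #|B|) => [B0 | Bpos].
  have [A0 [_ cA0]] : exists S : {set T}, S \subset setT /\ #|S| = k by apply: exists_sub; rewrite cardsT cT; lia.
  have [A AF] : exists A, A \in F.
    case: (boolP (col A0)) => c; first by exists A0; rewrite inF cA0 eqxx c.
    by exists (~: A0); apply: cF.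
  have -> : B = A :\: A by rewrite setDv; apply/eqP; rewrite -cards_eq0 B0.
  exact: dF.
have [S [SsubC cS]] : exists S : {set T}, S \subset ~: B /\ #|S| = k - #|B| - 1 by apply: exists_sub; rewrite cC; lia.
have hS : forall u, u \in S -> u \notin B.
  by move=> u uS; have := subsetP SsubC u uS; rewrite inE.
pose B' := B :|: S.
have cB' : #|B'| = k.-1 by rewrite cardsU_disj ?cS; [lia | move=> u uB; apply/negP => /hS; rewrite uB].
have [x [y [xB' yB' cx cy]]] := star B' cB'.
have xy : x != y by apply/eqP => exy; move: cy; rewrite -exy cx.
have cxy : #|x |: (y |: B')| = k.+1.
  rewrite cardsU1 cardsU1 yB' in_setU1 negb_or xy xB' cB'; lia.
have [Z [ZsubC cZ]] : exists Z : {set T}, Z \subset ~: (x |: (y |: B')) /\ #|Z| = k - #|B| by apply: exists_sub; rewrite cC cxy; lia.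
have hZ : forall u, u \in Z -> [/\ u != x, u != y, u \notin B & u \notin S].
  move=> u uZ; have := subsetP ZsubC u uZ; rewrite !inE !negb_or.
  by case/and4P=> -> -> -> ->.
have cBZ : #|B :|: Z| = k.
  rewrite cardsU_disj; first lia.
  by move=> u uB; apply/negP => /hZ [_ _ ]; rewrite uB.
have cyB' : #|y |: B'| = k by rewrite cardsU1 yB' cB'; lia.
have cxB' : #|x |: B'| = k by rewrite cardsU1 xB' cB'; lia.
case: (boolP (col (B :|: Z))) => cz.
  have -> : B = (B :|: Z) :\: ~: (y |: B').
    apply/setP => u; rewrite !inE negbK.
    case: (boolP (u \in Z)) => uZ.
      by have [_ /negbTE -> /negbTE -> /negbTE ->] := hZ u uZ.
    by rewrite orbF; case: (u \in B); rewrite ?orbT ?andbT ?andbF.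
  apply: dF; first by rewrite inF cBZ eqxx cz.
  by apply: cF.
have -> : B = (x |: B') :\: ~: (B :|: Z).
  apply/setP => u; rewrite !inE negbK.
  case: (boolP (u \in Z)) => uZ.
    by have [/negbTE -> _ /negbTE -> /negbTE ->] := hZ u uZ.
  by rewrite orbF; case: (u \in B); rewrite ?orbT ?andbT ?andbF.
apply: dF; first by rewrite inF cxB' eqxx cx.
by apply: cF.
Qed.
Lemma card_lt n m : m <= n -> #|[set x : 'I_n | x < m]| = m.
Proof.
elim: m => [|m IH] Hm.
  by apply/eqP; rewrite cards_eq0; apply/eqP/setP => x; rewrite !inE.
have -> : [set x : 'I_n | x < m.+1] = (Ordinal Hm) |: [set x : 'I_n | x < m].
  by apply/setP => x; rewrite !inE ltnS leq_eqVlt -val_eqE.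
by rewrite cardsU1 IH ?(ltnW Hm) // inE ltnn.
Qed.

Lemma card_itv n a b : a <= b -> b <= n -> #|[set x : 'I_n | a <= x < b]| = b - a.
Proof.
move=> ab bn.
have -> : [set x : 'I_n | a <= x < b] = [set x : 'I_n | x < b] :\: [set x : 'I_n | x < a].
  by apply/setP => x; rewrite !inE -leqNgt andbC.
rewrite cardsDS ?card_lt //; try lia.
by apply/subsetP => x; rewrite !inE => h; lia.
Qed.

Definition cls (T : finType) (pt : T -> nat) c : {set T} := [set x | pt x == c].
Definition cnt (T : finType) (pt : T -> nat) c (A : {set T}) := #|cls pt c :&: A|.

Lemma cnt_C (T : finType) (pt : T -> nat) c (A : {set T}) :
  cnt pt c (~: A) = #|cls pt c| - cnt pt c A.
Proof. by rewrite /cnt -setDE; have := cardsID A (cls pt c); lia. Qed.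

Lemma cnt_le (T : finType) (pt : T -> nat) c (A : {set T}) : cnt pt c A <= #|cls pt c|.
Proof. by apply: subset_leq_card; apply: subsetIl. Qed.

Lemma cnt_U1 (T : finType) (pt : T -> nat) c (A : {set T}) x : x \notin A ->
  cnt pt c (x |: A) = cnt pt c A + (pt x == c).
Proof.
move=> xA; rewrite /cnt setIUr.
case: (boolP (pt x == c)) => h.
  have -> : cls pt c :&: [set x] = [set x].
    by apply/setIidPr; rewrite sub1set inE.
  by rewrite cardsU1 inE (negbTE xA) andbF; lia.
have -> : cls pt c :&: [set x] = set0.
  apply/setP => u; rewrite !inE; apply/negP => /andP [h1 /eqP e].
  by move: h; rewrite -e h1.
by rewrite set0U; lia.
Qed.

Lemma cnt_avail (T : finType) (pt : T -> nat) c (A : {set T}) :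
  cnt pt c A < #|cls pt c| -> exists x, x \notin A /\ pt x = c.
Proof.
move=> h.
have : 0 < cnt pt c (~: A) by rewrite cnt_C; lia.
rewrite /cnt card_gt0 => /set0Pn [x]; rewrite !inE => /andP [/eqP h1 h2].
by exists x.
Qed.

Lemma cnt_sum (T : finType) (pt : T -> nat) (A : {set T}) :
  (forall x, pt x < 5) ->
  #|A| = cnt pt 0 A + cnt pt 1 A + cnt pt 2 A + cnt pt 3 A + cnt pt 4 A.
Proof.
move=> H.
have E : forall x, \sum_(c < 5) (pt x == c) = 1.
  move=> x; rewrite !big_ord_recr big_ord0 /=; have := H x.
  by case: (pt x) => [|[|[|[|[|?]]]]].
have E2 : forall c, cnt pt c A = \sum_(x in A) (pt x == c).
  move=> c.
  rewrite (eq_bigr (fun x => if pt x == c then 1 else 0)); last by move=> x _; case: (pt x == c).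
  rewrite -big_mkcondr sum1_card /cnt; apply: eq_card => x.
  by rewrite !inE andbC.
transitivity (\sum_(x in A) \sum_(c < 5) (pt x == c)).
  by rewrite -sum1_card; apply: eq_bigr => x _; rewrite E.
rewrite exchange_big !big_ord_recr big_ord0 /= !E2.
by rewrite add0n.
Qed.
Definition colE (k e f g i : nat) : bool :=
 if g == 1 then odd (e + i)
 else if g == 2 then
   (if (e == 0) && (f == 0) && (i == k - 2) then true
    else if (e == 1) && (f == 0) && (i == 0) then false
    else odd (e + i) (+) ((e == 0) && (f == 1)))
 else
   (if (e == 1) && (f == 1) && (i == 0) then false
    else if (e == 0) && (f == 1) && (i == k - 2) then true
    else odd (e + i) (+) ((e == 1) && (f == 0))).

Definition colv (k e f g i : nat) : bool :=
  if odd k then odd (e + f + i) else colE k e f g i.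

Lemma oddkm2 k i : i <= k - 2 -> 2 <= k -> odd (k - 2 - i) = odd k (+) odd i.
Proof. move=> h1 h2; rewrite -subnDA oddB; last lia. by rewrite oddD. Qed.

Lemma colv_anti k e f g i j : 3 <= k -> e <= 1 -> f <= 1 -> g <= 2 -> i <= k - 2 -> j <= k - 2 ->
  e + f + g + i + j = k ->
  colv k (1 - e) (1 - f) (2 - g) (k - 2 - i) = ~~ colv k e f g i.
Proof.
move=> k3 he hf hg hi hj hs; rewrite /colv.
case: ifP => Hk.
  have -> : 1 - e + (1 - f) + (k - 2 - i) = k - (e + f + i) by lia.
  by rewrite oddB ?Hk //; lia.
have E1 : (k - 2 - i == k - 2) = (i == 0) by apply/eqP/eqP; lia.
have E2 : (k - 2 - i == 0) = (i == k - 2) by apply/eqP/eqP; lia.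
have ne : (i == 0) && (i == k - 2) = false by apply/negP => /andP [/eqP ? /eqP ?]; lia.
have O1 : odd (k - 2 - i) = odd i by rewrite oddkm2 ?Hk //; lia.
have O2 : odd (1 + (k - 2 - i)) = ~~ odd i by rewrite oddD O1.
rewrite /colE.
clear hs hj; move: he hf hg; case: e => [|[|//]] _; case: f => [|[|//]] _;
  case: g => [|[|[|//]]] _ /=; rewrite ?E1 ?E2 ?add0n ?O1 ?O2 ?add1n /=.
all: case: (i == 0) ne; case: (i == k-2) => //= _.

all: by case: (odd i).
Qed.

Definition rm (k e f g i j c : nat) : bool :=
  [|| (c == 0) && (e < 1), (c == 1) && (f < 1), (c == 2) && (g < 2),
      (c == 3) && (i < k - 2) | (c == 4) && (j < k - 2)].

Definition incv (k e f g i c : nat) : bool :=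
  colv k (e + (c == 0)) (f + (c == 1)) (g + (c == 2)) (i + (c == 3)).

Lemma neq_of (x y : bool) : x = ~~ y -> x != y. Proof. by move=> ->; case: y. Qed.
Ltac fin i Ok2 Ok3 := apply: neq_of; rewrite /colE /= ?addn0 ?add0n; repeat (case: eqP => ?; try (exfalso; lia)); try subst i; rewrite ?oddD ?oddS ?Ok2 ?Ok3 /=; try done; try by (case: (odd i)).

Lemma colv_star k e f g i j : 3 <= k -> e <= 1 -> f <= 1 -> g <= 2 -> i <= k - 2 -> j <= k - 2 ->
  e + f + g + i + j = k.-1 ->
  exists c1 c2, [/\ rm k e f g i j c1, rm k e f g i j c2 & incv k e f g i c1 != incv k e f g i c2].
Proof.
move=> k3 he hf hg hi hj hs; rewrite /incv /rm.
case Hk: (odd k).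
  have H : forall a b, a = b.+1 -> odd a != odd b by move=> a b ->; rewrite oddS; case: (odd b).
  have H2 : forall c1 c2, ((c1 == 0) && (e < 1)) || ((c1 == 1) && (f < 1)) || ((c1 == 3) && (i < k - 2)) ->
     ((c2 == 2) && (g < 2)) || ((c2 == 4) && (j < k - 2)) ->
     e + (c1 == 0) + (f + (c1 == 1)) + (i + (c1 == 3)) = (e + f + i).+1 ->
     e + (c2 == 0) + (f + (c2 == 1)) + (i + (c2 == 3)) = (e + f + i) ->
     exists c1 c2, [/\ [|| (c1 == 0) && (e < 1), (c1 == 1) && (f < 1), (c1 == 2) && (g < 2),
      (c1 == 3) && (i < k - 2) | (c1 == 4) && (j < k - 2)],
     [|| (c2 == 0) && (e < 1), (c2 == 1) && (f < 1), (c2 == 2) && (g < 2),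
      (c2 == 3) && (i < k - 2) | (c2 == 4) && (j < k - 2)] &
     colv k (e + (c1 == 0)) (f + (c1 == 1)) (g + (c1 == 2)) (i + (c1 == 3)) !=
     colv k (e + (c2 == 0)) (f + (c2 == 1)) (g + (c2 == 2)) (i + (c2 == 3))].
    move=> c1 c2 r1 r2 s1 s2; exists c1, c2; split.
    - by move: r1; case: ((c1 == 0) && (e < 1)); case: ((c1 == 1) && (f < 1)); case: ((c1 == 3) && (i < k - 2)); rewrite /= ?orbT.
    - by move: r2; case: ((c2 == 2) && (g < 2)); case: ((c2 == 4) && (j < k - 2)); rewrite /= ?orbT.
    - by rewrite /colv Hk s1 s2 H.
  have [h1|h1] : e < 1 \/ 1 <= e by lia.
    have [h2|h2] : g < 2 \/ 2 <= g by lia.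
      by apply: (H2 0 2); rewrite /= ?h1 ?h2 //; lia.
    by apply: (H2 0 4); rewrite /= ?h1 ?orbT //; lia.
  have [h3|h3] : f < 1 \/ 1 <= f by lia.
    have [h2|h2] : g < 2 \/ 2 <= g by lia.
      by apply: (H2 1 2); rewrite /= ?h3 ?h2 //; lia.
    by apply: (H2 1 4); rewrite /= ?h3 ?orbT //; lia.
  have [h2|h2] : g < 2 \/ 2 <= g by lia.
    by apply: (H2 3 2); rewrite /= ?h2 ?orbT //; lia.
  by apply: (H2 3 4); rewrite /= ?orbT //; lia.
have k3' : k != 3 by apply/eqP => e3; rewrite e3 in Hk.
have k4 : 4 <= k by lia.
have Ok2 : odd (k - 2) = false by rewrite oddB ?Hk //; lia.
have Ok3 : odd (k - 3) = true by rewrite oddB ?Hk //; lia.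
have H3 : forall c1 c2, [|| (c1 == 0) && (e < 1), (c1 == 1) && (f < 1), (c1 == 2) && (g < 2),
      (c1 == 3) && (i < k - 2) | (c1 == 4) && (j < k - 2)] ->
     [|| (c2 == 0) && (e < 1), (c2 == 1) && (f < 1), (c2 == 2) && (g < 2),
      (c2 == 3) && (i < k - 2) | (c2 == 4) && (j < k - 2)] ->
     colE k (e + (c1 == 0)) (f + (c1 == 1)) (g + (c1 == 2)) (i + (c1 == 3)) !=
     colE k (e + (c2 == 0)) (f + (c2 == 1)) (g + (c2 == 2)) (i + (c2 == 3)) ->
     exists c1 c2, [/\ [|| (c1 == 0) && (e < 1), (c1 == 1) && (f < 1), (c1 == 2) && (g < 2),
      (c1 == 3) && (i < k - 2) | (c1 == 4) && (j < k - 2)],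
     [|| (c2 == 0) && (e < 1), (c2 == 1) && (f < 1), (c2 == 2) && (g < 2),
      (c2 == 3) && (i < k - 2) | (c2 == 4) && (j < k - 2)] &
     colv k (e + (c1 == 0)) (f + (c1 == 1)) (g + (c1 == 2)) (i + (c1 == 3)) !=
     colv k (e + (c2 == 0)) (f + (c2 == 1)) (g + (c2 == 2)) (i + (c2 == 3))].
  by move=> c1 c2 r1 r2 d; exists c1, c2; rewrite /colv Hk.
move: H3 he hf hg hs.
case: e => [|[|//]] H3 _; case: f H3 => [|[|//]] H3 _; case: g H3 => [|[|[|//]]] H3 _ hs.
- have [hi2|hi2] : i < k - 2 \/ i = k - 2 by lia.
  + apply: (H3 3 2); [rewrite /= ?orbF ?orbT //; lia | rewrite /= ?orbF ?orbT //; lia | fin i Ok2 Ok3].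
  + apply: (H3 1 2); [rewrite /= ?orbF ?orbT //; lia | rewrite /= ?orbF ?orbT //; lia | fin i Ok2 Ok3].
- apply: (H3 0 1); [rewrite /= ?orbF ?orbT //; lia | rewrite /= ?orbF ?orbT //; lia | fin i Ok2 Ok3].
- have [hi2|hi2] : i < k - 3 \/ i = k - 3 by lia.
  + apply: (H3 3 4); [rewrite /= ?orbF ?orbT //; lia | rewrite /= ?orbF ?orbT //; lia | fin i Ok2 Ok3].
  + apply: (H3 0 4); [rewrite /= ?orbF ?orbT //; lia | rewrite /= ?orbF ?orbT //; lia | fin i Ok2 Ok3].
- have [hi2|hi2] : i = 0 \/ 1 <= i by lia.
  + apply: (H3 3 2); [rewrite /= ?orbF ?orbT //; lia | rewrite /= ?orbF ?orbT //; lia | fin i Ok2 Ok3].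
  + apply: (H3 0 2); [rewrite /= ?orbF ?orbT //; lia | rewrite /= ?orbF ?orbT //; lia | fin i Ok2 Ok3].
- apply: (H3 0 4); [rewrite /= ?orbF ?orbT //; lia | rewrite /= ?orbF ?orbT //; lia | fin i Ok2 Ok3].
- apply: (H3 3 4); [rewrite /= ?orbF ?orbT //; lia | rewrite /= ?orbF ?orbT //; lia | fin i Ok2 Ok3].
- have [hi2|hi2] : j < k - 2 \/ i = 0 by lia.
  + apply: (H3 4 2); [rewrite /= ?orbF ?orbT //; lia | rewrite /= ?orbF ?orbT //; lia | fin i Ok2 Ok3].
  + apply: (H3 1 2); [rewrite /= ?orbF ?orbT //; lia | rewrite /= ?orbF ?orbT //; lia | fin i Ok2 Ok3].
- apply: (H3 3 1); [rewrite /= ?orbF ?orbT //; lia | rewrite /= ?orbF ?orbT //; lia | fin i Ok2 Ok3].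
- have [hi2|hi2] : 1 <= i \/ i = 0 by lia.
  + apply: (H3 3 4); [rewrite /= ?orbF ?orbT //; lia | rewrite /= ?orbF ?orbT //; lia | fin i Ok2 Ok3].
  + apply: (H3 3 1); [rewrite /= ?orbF ?orbT //; lia | rewrite /= ?orbF ?orbT //; lia | fin i Ok2 Ok3].
- apply: (H3 3 2); [rewrite /= ?orbF ?orbT //; lia | rewrite /= ?orbF ?orbT //; lia | fin i Ok2 Ok3].
- apply: (H3 3 4); [rewrite /= ?orbF ?orbT //; lia | rewrite /= ?orbF ?orbT //; lia | fin i Ok2 Ok3].
- apply: (H3 3 4); [rewrite /= ?orbF ?orbT //; lia | rewrite /= ?orbF ?orbT //; lia | fin i Ok2 Ok3].
Qed.

Definition ptn (k x : nat) : nat :=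
  if x < 1 then 0 else if x < 2 then 1 else if x < 4 then 2 else if x < k.+2 then 3 else 4.

Lemma t1_family k n : 3 <= k -> n = (2 * k)%N ->
  exists F : {set {set 'I_n}}, (forall A, A \in F -> #|A| = k) /\ t_intersecting 1 F /\
  (forall B : {set 'I_n}, #|B| <= k.-1 -> B \in diff_family F).
Proof.
move=> k3 en.
pose pt := fun x : 'I_n => ptn k x.
have ptE : forall c a b, (forall x : nat, (ptn k x == c) = (a <= x < b)) -> a <= b -> b <= n ->
    #|cls pt c| = b - a.
  move=> c a b h ab bn; rewrite -(card_itv ab bn); apply: eq_card => x.
  by rewrite !inE /pt h.
have s0 : #|cls pt 0| = 1.
  have h : forall x : nat, (ptn k x == 0) = (0 <= x < 1) by move=> x; rewrite /ptn; case: (ltnP x 1) => ?; case: (ltnP x 2) => ?; case: (ltnP x 4) => ?; case: (ltnP x k.+2) => ?; lia.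
  rewrite (ptE _ _ _ h); lia.
have s1 : #|cls pt 1| = 1.
  have h : forall x : nat, (ptn k x == 1) = (1 <= x < 2) by move=> x; rewrite /ptn; case: (ltnP x 1) => ?; case: (ltnP x 2) => ?; case: (ltnP x 4) => ?; case: (ltnP x k.+2) => ?; lia.
  rewrite (ptE _ _ _ h); lia.
have s2 : #|cls pt 2| = 2.
  have h : forall x : nat, (ptn k x == 2) = (2 <= x < 4) by move=> x; rewrite /ptn; case: (ltnP x 1) => ?; case: (ltnP x 2) => ?; case: (ltnP x 4) => ?; case: (ltnP x k.+2) => ?; lia.
  rewrite (ptE _ _ _ h); lia.
have s3 : #|cls pt 3| = k - 2.
  have h : forall x : nat, (ptn k x == 3) = (4 <= x < k.+2) by move=> x; rewrite /ptn; case: (ltnP x 1) => ?; case: (ltnP x 2) => ?; case: (ltnP x 4) => ?; case: (ltnP x k.+2) => ?; lia.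
  rewrite (ptE _ _ _ h); lia.
have s4 : #|cls pt 4| = k - 2.
  have -> : #|cls pt 4| = #|[set x : 'I_n | k.+2 <= x < n]|.
    apply: eq_card => x; rewrite !inE /pt /ptn ltn_ord andbT.
    by case: (ltnP x 1) => ?; case: (ltnP x 2) => ?; case: (ltnP x 4) => ?; case: (ltnP x k.+2) => ?; lia.
  rewrite card_itv //; lia.
have pt5 : forall x, pt x < 5 by move=> x; rewrite /pt /ptn; case: (ltnP x 1) => ?; case: (ltnP x 2) => ?; case: (ltnP x 4) => ?; case: (ltnP x k.+2) => ?.
apply: (kneser (col := fun A => colv k (cnt pt 0 A) (cnt pt 1 A) (cnt pt 2 A) (cnt pt 3 A))).
- by rewrite card_ord.
- lia.
- move=> A cA; rewrite !cnt_C s0 s1 s2 s3.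
  have := cnt_sum A pt5; have := cnt_le pt 0 A; have := cnt_le pt 1 A; have := cnt_le pt 2 A;
  have := cnt_le pt 3 A; have := cnt_le pt 4 A; rewrite s0 s1 s2 s3 s4 => *.
  by apply: (colv_anti (j := cnt pt 4 A)); lia.
move=> B cB.
have := cnt_sum B pt5; have := cnt_le pt 0 B; have := cnt_le pt 1 B; have := cnt_le pt 2 B;
have := cnt_le pt 3 B; have := cnt_le pt 4 B; rewrite s0 s1 s2 s3 s4 => h4 h3 h2 h1 h0 hs.
have [c1 [c2 [r1 r2 d]]] := colv_star (j := cnt pt 4 B) k3 h0 h1 h2 h3 h4 (etrans (esym hs) cB).
have rmA : forall c, rm k (cnt pt 0 B) (cnt pt 1 B) (cnt pt 2 B) (cnt pt 3 B) (cnt pt 4 B) c ->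
    exists x, x \notin B /\ pt x = c.
  move=> c; rewrite /rm.
  case/orP => [/andP [/eqP -> h] | /orP [/andP [/eqP -> h] | /orP [/andP [/eqP -> h] |
     /orP [/andP [/eqP -> h] | /andP [/eqP -> h]]]]]; apply: cnt_avail;
     rewrite ?s0 ?s1 ?s2 ?s3 ?s4 //.
have [x [xB px]] := rmA c1 r1.
have [y [yB py]] := rmA c2 r2.
have Cx : colv k (cnt pt 0 (x |: B)) (cnt pt 1 (x |: B)) (cnt pt 2 (x |: B)) (cnt pt 3 (x |: B))
    = incv k (cnt pt 0 B) (cnt pt 1 B) (cnt pt 2 B) (cnt pt 3 B) c1.
  by rewrite !cnt_U1 // px.
have Cy : colv k (cnt pt 0 (y |: B)) (cnt pt 1 (y |: B)) (cnt pt 2 (y |: B)) (cnt pt 3 (y |: B))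
    = incv k (cnt pt 0 B) (cnt pt 1 B) (cnt pt 2 B) (cnt pt 3 B) c2.
  by rewrite !cnt_U1 // py.
move: d Cx Cy.
case: (incv k (cnt pt 0 B) (cnt pt 1 B) (cnt pt 2 B) (cnt pt 3 B) c1);
case: (incv k (cnt pt 0 B) (cnt pt 1 B) (cnt pt 2 B) (cnt pt 3 B) c2) => // _ Cx Cy.
- by exists x, y; rewrite Cx Cy.
- by exists y, x; rewrite Cx Cy.
Qed.

Theorem corollary1 (k t : nat) :
  3 <= k -> 1 <= t -> t <= k - 1 ->
  exists F : {set {set 'I_(2 * k - t + 1)}},
    (forall A, A \in F -> #|A| = k) /\
    t_intersecting t F /\
    (forall B : {set 'I_(2 * k - t + 1)},
       B \subset initseg (2 * k - t + 1) (2 * k - 2 * t + 2) ->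
       #|B| <= k - t ->
       B \in diff_family F).
Proof.
move=> k3 t1 tk.
have [et|t2] : t = 1 \/ 2 <= t by lia.
  subst t.
  have [F [H1 [H2 H3]]] := @t1_family k (2 * k - 1 + 1) k3 ltac:(lia).
  exists F; split=> //; split=> //.
  by move=> B _ cB; apply: H3; lia.
set n := 2 * k - t + 1.
pose Y := [set x : 'I_n | x < 2 * k - t].
have cY : #|Y| = 2 * k - t by rewrite card_lt //; rewrite /n; lia.
exists [set A : {set 'I_n} | (A \subset Y) && (#|A| == k)].
have inF : forall A, (A \in [set A : {set 'I_n} | (A \subset Y) && (#|A| == k)]) = (A \subset Y) && (#|A| == k).
  by move=> A; rewrite inE.
split; first by move=> A; rewrite inF => /andP [_ /eqP].
split.
  move=> A B; rewrite !inF => /andP [AY /eqP cA] /andP [BY /eqP cB].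
  have := cardsUI A B; have : #|A :|: B| <= #|Y| by apply: subset_leq_card; rewrite subUset AY BY.
  rewrite cY; lia.
move=> B Bs cB.
have BY : B \subset Y.
  apply/subsetP => x xB; have := subsetP Bs x xB; rewrite !inE; lia.
have [C [CsubY cC]] : exists C : {set 'I_n}, C \subset Y :\: B /\ #|C| = k - #|B|.
  by apply: exists_sub; rewrite cardsDS // cY; lia.
have hC : forall u, u \in C -> u \notin B /\ u \in Y.
  by move=> u uC; have := subsetP CsubY u uC; rewrite inE => /andP [].
have cBC : #|B :|: C| = k.
  rewrite cardsU_disj; first lia.
  by move=> u uB; apply/negP => /hC [] ; rewrite uB.
have BCY : B :|: C \subset Y.
  by rewrite subUset BY; apply/subsetP => u /hC [].
have [D [DsubY cD]] : exists D : {set 'I_n}, D \subset Y :\: (B :|: C) /\ #|D| = #|B|.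
  by apply: exists_sub; rewrite cardsDS // cY cBC; lia.
have hD : forall u, u \in D -> [/\ u \notin B, u \notin C & u \in Y].
  move=> u uD; have := subsetP DsubY u uD; rewrite !inE negb_or.
  by case/andP => /andP [-> ->] ->.
have -> : B = (B :|: C) :\: (C :|: D).
  apply/setP => u; rewrite !inE.
  case: (boolP (u \in B)) => uB /=.
    have uC : u \notin C by apply/negP => /hC []; rewrite uB.
    have uD : u \notin D by apply/negP => /hD []; rewrite uB.
    by rewrite (negbTE uC) (negbTE uD).
  by case: (u \in C); rewrite ?andbF ?orbT.

rewrite /diff_family; apply: imset2_f.
  by rewrite inF BCY cBC eqxx.
rewrite inF subUset (subset_trans CsubY (subsetDl _ _)).
have DY : D \subset Y by apply/subsetP => u /hD [].
rewrite DY /= cardsU_disj ?cC ?cD; first by apply/eqP; lia.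
by move=> u uC; apply/negP => /hD [_ uC' _]; rewrite uC in uC'.
Qed.
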